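(* Let $k\in\mathbb Z$ and $u_0\in\Sigma^1_k$. Suppose there exist $T>0$ and a solution $u\in C^1([0,T),\Lambda^1_k)$ of $u_{xt}=\sin(u)$ with $u(0)=u_0$. Then \[ K_1(u_0):=\int_0^1\cos(u_0)\,\partial_x^{-1}\sin(u_0)\,dx=0 . \]
   Context: $\mathbb T=\mathbb R/\mathbb Z$, $H^m=H^m(\mathbb T,\mathbb R)$, $H_0^m$ is its mean-zero subspace, and $\partial_x^{-1}$ is the mean-zero antiderivative. For $k\in\mathbb Z$, $\Lambda^m_k$ is the set of $u:\mathbb R\to\mathbb R$ of the form $u(x)=2\pi kx+\mathring u(x)+c$ with $\mathring u\in H_0^m$ ($1$-periodically extended) and $c\in\mathbb R/2\pi\mathbb Z$. We set \[ \Sigma^1_k=\Big\{u\in\Lambda^1_k:\int_0^1\sin u\,dx=0=\int_0^1\cos u\,dx\Big\}. \] For $u\in\Sigma^1_k$, $\sin u$ is $1$-periodic with mean zero, so $\partial_x^{-1}\sin u$ is defined. A solution $u\in C^1([0,T),\Lambda^1_k)$ means a $C^1$ curve with $\partial_t u(t)\in H^1$ and $\partial_x\partial_t u(t)=\sin(u(t))$ for all $t$. *)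

(* Defs.v *)
From HB Require Import structures.
From mathcomp Require Import all_boot all_order all_algebra.
From mathcomp Require Import all_classical all_reals all_analysis.
Set Implicit Arguments. Unset Strict Implicit. Unset Printing Implicit Defensive.
Import Order.TTheory GRing.Theory Num.Theory.
Import numFieldNormedType.Exports.
Local Open Scope classical_set_scope.
Local Open Scope ring_scope.

Section Defs.
Variable R : realType.
Local Notation leb := (@lebesgue_measure R).

Definition Rint (a b : R) (f : R -> R) : R := \int[leb]_(x in `[a, b]) f x.

Definition L2_01 (g : R -> R) : Prop :=
  measurable_fun `[(0:R), 1] g /\
  leb.-integrable `[(0:R), 1] (EFin \o g) /\
  leb.-integrable `[(0:R), 1] (EFin \o (fun x => g x ^+ 2)).

Definition wderiv (f g : R -> R) : Prop :=
  L2_01 g /\ forall x, 0 <= x <= 1 -> f x = f 0 + Rint 0 x g.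

(** f (a 1-periodic function on R) is (the continuous representative of) an
    element of H^1(T). *)
Definition H1 (f : R -> R) : Prop :=
  (forall x, f (x + 1) = f x) /\ exists g, wderiv f g.

Definition h1_lt (f : R -> R) (e : R) : Prop :=
  exists g, wderiv f g /\ Rint 0 1 (fun x => f x ^+ 2) + Rint 0 1 (fun x => g x ^+ 2) < e ^+ 2.

(** Lambda^1_k : u(x) = 2 pi k x + (H^1 function); the constant c is lifted to R. *)
Definition Lambda1 (k : int) (u : R -> R) : Prop :=
  H1 (fun x => u x - 2 * pi * k%:~R * x).

Definition Sigma1 (k : int) (u : R -> R) : Prop :=
  Lambda1 k u /\ Rint 0 1 (fun x => sin (u x)) = 0 /\ Rint 0 1 (fun x => cos (u x)) = 0.

(** mean-zero antiderivative on [0,1] *)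
Definition antider0 (f : R -> R) (x : R) : R :=
  Rint 0 x f - Rint 0 1 (fun y => Rint 0 y f).

Definition K1 (u0 : R -> R) : R :=
  Rint 0 1 (fun x => cos (u0 x) * antider0 (fun y => sin (u0 y)) x).

(** u : [0,T) -> Lambda^1_k is a C^1 curve (in the H^1 topology), with time
    derivative v t in H^1, solving d_x d_t u = sin u, and u 0 = u0. *)
Definition is_solution (k : int) (T : R) (u : R -> R -> R) (u0 : R -> R) : Prop :=
  u 0 = u0 /\
  (forall t, 0 <= t < T -> Lambda1 k (u t)) /\
  exists v : R -> R -> R,
    (forall t, 0 <= t < T -> H1 (v t)) /\
    (forall t, 0 <= t < T -> forall e, 0 < e -> exists2 d, 0 < d &
       forall h, h != 0 -> 0 <= t + h < T -> `|h| < d ->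
         h1_lt (fun x => (u (t + h) x - u t x) / h - v t x) e) /\
    (forall t, 0 <= t < T -> forall e, 0 < e -> exists2 d, 0 < d &
       forall s, 0 <= s < T -> `|s - t| < d -> h1_lt (fun x => v s x - v t x) e) /\
    (forall t, 0 <= t < T -> wderiv (v t) (fun x => sin (u t x))).

End Defs.

(* Main.v *)
Require Import Defs.
From mathcomp Require Import all_boot all_order all_algebra.
From mathcomp Require Import all_classical all_reals all_analysis.
From mathcomp Require Import ring lra.
Import Order.TTheory GRing.Theory Num.Theory.
Import numFieldNormedType.Exports.
Local Open Scope classical_set_scope.
Local Open Scope ring_scope.

Section S1.
Context {R : realType}.
Local Notation mu := (@lebesgue_measure R).
Local Notation I := [set` `[(0:R), 1]].

Lemma RintE a b f : Defs.Rint a b f = \int[mu]_(x in `[a, b]) f x.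
Proof. by []. Qed.

Lemma cD {f g : R -> R} : {within I, continuous f} -> {within I, continuous g} ->
  {within I, continuous (fun x => f x + g x)}.
Proof. move=> cf cg x; exact: (continuousD (cf x) (cg x)). Qed.

Lemma cM {f g : R -> R} : {within I, continuous f} -> {within I, continuous g} ->
  {within I, continuous (fun x => f x * g x)}.
Proof. move=> cf cg x; exact: (continuousM (cf x) (cg x)). Qed.

Lemma cN {f : R -> R} : {within I, continuous f} ->
  {within I, continuous (fun x => - f x)}.
Proof. move=> cf x; exact: (continuousN (cf x)). Qed.

Lemma cC (c : R) : {within I, continuous (fun _ : R => c)}.
Proof. exact: cst_continuous. Qed.

Lemma cId : {within I, continuous (fun x : R => x)}.
Proof. by apply: continuous_subspaceT => x; exact: cvg_id. Qed.

Lemma cComp (g f : R -> R) : continuous g -> {within I, continuous f} ->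
  {within I, continuous (fun x => g (f x))}.
Proof. move=> cg cf x; exact: (continuous_comp (cf x) (cg _)). Qed.

Lemma cInt f : {within I, continuous f} -> mu.-integrable I (EFin \o f).
Proof. move=> cf; apply: continuous_compact_integrable => //; exact: segment_compact. Qed.

Lemma cEq (f g : R -> R) : (forall x, 0 <= x <= 1 -> f x = g x) ->
  {within I, continuous f} -> {within I, continuous g}.
Proof.
move=> fg; apply: subspace_eq_continuous => x; rewrite inE /= in_itv /= => xI.
exact: fg.
Qed.

Lemma cWd f g : wderiv f g -> {within I, continuous f}.
Proof.
rewrite /wderiv /L2_01 => -[[_ [ig _]] fE].
apply: (@cEq (fun x => f 0 + parameterized_integral mu 0 x g)).
  by move=> x xI; rewrite (fE x xI).
apply: cD; first exact: cC.
by apply: parameterized_integral_continuous.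
Qed.

End S1.

Lemma cX2 {R : realType} {f : R -> R} : {within [set` `[(0:R), 1]], continuous f} ->
  {within [set` `[(0:R), 1]], continuous (fun x => f x ^+ 2)}.
Proof.
move=> cf; apply: (@cEq _ (fun x => f x * f x)) => [x _|]; first by rewrite expr2.
exact: cM.
Qed.

Lemma cAbs {R : realType} {f : R -> R} : {within [set` `[(0:R), 1]], continuous f} ->
  {within [set` `[(0:R), 1]], continuous (fun x => `|f x|)}.
Proof. move=> cf; apply: cComp => //; exact: norm_continuous. Qed.


Section S2.
Variable R : realType.

Lemma mvt_bound (f df : R -> R) (a b M : R) :
  (forall x : R, is_derive x (1:R) f (df x)) ->
  (forall c, Num.min a b <= c <= Num.max a b -> `|df c| <= M) ->
  `|f b - f a| <= M * `|b - a|.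
Proof.
move=> fd bd.
have cf : continuous f.
  by move=> x; apply/differentiable_continuous/derivable1_diffP; exact: ex_derive.
wlog ab : a b bd / a <= b.
  move=> H; have [/H|/ltW ba] := leP a b; first exact.
  rewrite distrC (distrC b); apply: H => // c; rewrite minC maxC; exact: bd.
have [c cab ->] := @MVT_segment R f df a b ab (fun x _ => fd x)
   (continuous_subspaceT cf).
rewrite normrM; apply: ler_wpM2r => //; apply: bd.
move: cab; rewrite in_itv /= => /andP[ac cb].
by rewrite (min_l ab) (max_r ab) ac cb.
Qed.

Lemma lip_sin x y : `|sin x - sin y| <= `|x - y| :> R.
Proof.
have := @mvt_bound sin cos y x 1; rewrite mul1r; apply => // c _.
exact: cos_max.
Qed.

Lemma lip_cos x y : `|cos x - cos y| <= `|x - y| :> R.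
Proof.
have := @mvt_bound cos (fun x => - sin x) y x 1; rewrite mul1r; apply => // c _.
by rewrite normrN; exact: sin_max.
Qed.

Lemma sin_lin (b : R) : `|sin b - b| <= b ^+ 2.
Proof.
suff H : `|(sin b - b) - (sin 0 - 0)| <= `|b| * `|b - 0|.
  by move: H; rewrite sin0 !subr0 -normrM -expr2 ger0_norm ?sqr_ge0.
apply: (@mvt_bound (fun s => sin s - s) (fun s => cos s - 1)).
move=> c cb; rewrite -cos0; apply: (le_trans (lip_cos _ _)); rewrite subr0.
move: cb; case: (leP 0 b) => b0.
  by move=> /andP[c0 cb]; rewrite !ger0_norm.
move=> /andP[c0 cb].
by rewrite !ler0_norm ?lerN2 // ltW.
Qed.

Lemma cos_lin (b : R) : `|cos b - 1| <= b ^+ 2.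
Proof.
suff H : `|cos b - cos 0| <= `|b| * `|b - 0|.
  by move: H; rewrite cos0 !subr0 -normrM -expr2 ger0_norm ?sqr_ge0.
apply: (@mvt_bound cos (fun s => - sin s)) => // c cb.
rewrite normrN; have := lip_sin c 0; rewrite sin0 !subr0 => H; apply: (le_trans H).
move: cb; case: (leP 0 b) => b0.
  by move=> /andP[c0 cb]; rewrite !ger0_norm.
move=> /andP[c0 cb].
by rewrite !ler0_norm ?lerN2 // ltW.
Qed.

Lemma sin_taylor (a b : R) : `|sin (a + b) - sin a - cos a * b| <= 2 * b ^+ 2.
Proof.
have -> : sin (a + b) - sin a - cos a * b = sin a * (cos b - 1) + cos a * (sin b - b).
  by rewrite sinD; ring.
apply: (le_trans (ler_normD _ _)); rewrite !normrM mulr2n mulrDl mul1r.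
apply: lerD; rewrite -[X in _ <= X]mul1r; apply: ler_pM => //.
- exact: sin_max.
- exact: cos_lin.
- exact: cos_max.
- exact: sin_lin.
Qed.
End S2.


Lemma pt_bound (R : realType) (a a' h v e w : R) : 0 < h -> 0 < e ->
  w = (a' - a) / h - v ->
  `|h * (cos a * v) - (sin a' - sin a)| <=
    h * (e / 2) + ((h / (2 * e) + 4 * h ^+ 2) * w ^+ 2 + 4 * h ^+ 2 * v ^+ 2).
Proof.
move=> h0 e0 wE.
have hn : h != 0 by rewrite gt_eqF.
have en : e != 0 by rewrite gt_eqF.
set b := a' - a.
have bE : b = h * (v + w) by rewrite wE /b; field.
have a'E : a' = a + b by rewrite /b; ring.
have := @sin_taylor _ a b; set Rm := sin (a + b) - sin a - cos a * b => HR.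
have PE : h * (cos a * v) - (sin a' - sin a) = - (h * cos a * w) - Rm.
  by rewrite /Rm a'E bE; ring.
have hw : `|h * cos a * w| <= h * `|w|.
  rewrite !normrM (gtr0_norm h0) -mulrA ler_pM2l //.
  by rewrite -[X in _ <= X]mul1r; apply: ler_wpM2r => //; exact: cos_max.
have b2 : b ^+ 2 <= 2 * h ^+ 2 * (v ^+ 2 + w ^+ 2).
  rewrite bE; have := sqr_ge0 (v - w); nra.
have wb : `|w| <= e / 2 + w ^+ 2 / (2 * e).
  have : 2 * e * `|w| <= w ^+ 2 + e ^+ 2.
    have := sqr_ge0 (`|w| - e); rewrite -[w ^+ 2]real_normK ?num_real //; nra.
  move=> H.
  have -> : e / 2 + w ^+ 2 / (2 * e) = (w ^+ 2 + e ^+ 2) / (2 * e) by field.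
  by rewrite ler_pdivlMr ?mulr_gt0 // mulrC.
have E1 : (h / (2 * e) + 4 * h ^+ 2) * w ^+ 2 = h * (e / 2 + w ^+ 2 / (2 * e)) - h * (e / 2) + 4 * h ^+ 2 * w ^+ 2 by field.
rewrite E1.
rewrite PE; apply: (le_trans (ler_normB _ _)).
have hwb : h * `|w| <= h * (e / 2 + w ^+ 2 / (2 * e)) by rewrite ler_pM2l.
have HR2 : `|Rm| <= 2 * (2 * h ^+ 2 * (v ^+ 2 + w ^+ 2)) by apply: (le_trans HR); lra.
have E2 : 2 * (2 * h ^+ 2 * (v ^+ 2 + w ^+ 2)) = 4 * h ^+ 2 * w ^+ 2 + 4 * h ^+ 2 * v ^+ 2 by ring.
rewrite normrN; lra.
Qed.


Theorem lemma4p1 (R : realType) (k : int) (u0 : R -> R) :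
  Sigma1 k u0 ->
  (exists (T : R) (u : R -> R -> R), 0 < T /\ is_solution k T u u0) ->
  K1 u0 = 0.
Proof.
rewrite /Sigma1 /is_solution => -[_ [_ Sc]] [T [u [T0 [u00 [Lu [v [Hv [Hd [_ Heq]]]]]]]]].
subst u0.
have t0 : 0 <= (0:R) < T by rewrite lexx T0.
have cu : forall t, 0 <= t < T -> {within [set` `[(0:R), 1]], continuous (u t)}.
  move=> t tT; case: (Lu t tT) => _ [g /cWd cg].
  apply: (@cEq _ (fun x => (u t x - 2 * pi * k%:~R * x) + 2 * pi * k%:~R * x)).
    by move=> x _; rewrite subrK.
  apply: cD => //; apply: cM; [exact: cC | exact: cId].
have cv : forall t, 0 <= t < T -> {within [set` `[(0:R), 1]], continuous (v t)}.
  by move=> t tT; case: (Hv t tT) => _ [g /cWd].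
have per : forall t, 0 <= t < T -> Defs.Rint 0 1 (fun x => sin (u t x)) = 0.
  move=> t tT; case: (Heq t tT) => _ E.
  have := E 1; rewrite ler01 lexx => /(_ isT) E1.
  have := (Hv t tT).1 0; rewrite add0r => P.
  lra.
have mI : measurable ([set` `[(0:R), 1]] : set (measurableTypeR R)) by exact: measurable_itv.
have cI f : {within [set` `[(0:R), 1]], continuous f} ->
    (@lebesgue_measure R).-integrable [set` `[(0:R), 1]] (EFin \o f) by exact: cInt.
have cs : continuous (@sin R) := @continuous_sin R.
have cc : continuous (@cos R) := @continuous_cos R.
set D := Defs.Rint 0 1 (fun x => cos (u 0 x) * v 0 x).
have D0 : D = 0.
  case: (eqVneq D 0) => // Dn; exfalso.
  have eps0 : 0 < `|D| by rewrite normr_gt0.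
  set eps := `|D| in eps0.
  pose e := Num.min (eps / 2) 1.
  have e0 : 0 < e by rewrite lt_min ltr01 andbT divr_gt0.
  have e1 : e <= 1 by rewrite ge_min lexx orbT.
  have e2 : e <= eps / 2 by rewrite ge_min lexx.
  have [d d0 Hd'] := Hd 0 t0 e e0.
  set V := Defs.Rint 0 1 (fun x => v 0 x ^+ 2).
  have V0 : 0 <= V by apply: Rintegral_ge0 => x _; exact: sqr_ge0.
  pose h := Num.min (Num.min (d / 2) (T / 2)) (eps / (16 * (V + 1))).
  have h0 : 0 < h by rewrite !lt_min !divr_gt0 //; lra.
  have hd : h < d.
    apply: (le_lt_trans (y := d / 2)); first by rewrite !ge_min lexx.
    lra.
  have hT : h < T.
    apply: (le_lt_trans (y := T / 2)); first by rewrite !ge_min lexx orbT.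
    lra.
  have hV : h * (16 * (V + 1)) <= eps.
    rewrite -ler_pdivlMr; last lra.
    by rewrite ge_min lexx orbT.
  have hn : h != 0 by rewrite gt_eqF.
  have := Hd' h hn; rewrite add0r ltW // hT gtr0_norm // => /(_ isT hd).
  case=> g [_ Hlt].
  move: Hlt => /= Hlt.
  set W := Defs.Rint 0 1 (fun x => ((u h x - u 0 x) / h - v 0 x) ^+ 2) in Hlt.
  have G0 : 0 <= Defs.Rint 0 1 (fun x => g x ^+ 2) by apply: Rintegral_ge0 => x _; exact: sqr_ge0.
  have We : W < e ^+ 2 by lra.
  have W0 : 0 <= W by apply: Rintegral_ge0 => x _; exact: sqr_ge0.
  have hT' : 0 <= h < T by rewrite ltW.
  have cu0 := cu 0 t0; have cuh := cu h hT'; have cv0 := cv 0 t0.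
  have cw : {within [set` `[(0:R), 1]], continuous (fun x => (u h x - u 0 x) / h - v 0 x)}.
    apply: cD; last exact: cN.
    apply: cM; last exact: cC.
    by apply: cD => //; exact: cN.
  have cCV : {within [set` `[(0:R), 1]], continuous (fun x => cos (u 0 x) * v 0 x)}.
    by apply: cM => //; exact: cComp.
  have cP1 : {within [set` `[(0:R), 1]], continuous (fun x => h * (cos (u 0 x) * v 0 x))}.
    by apply: cM => //; exact: cC.
  have cSh : {within [set` `[(0:R), 1]], continuous (fun x => sin (u h x))} by exact: cComp.
  have cS0 : {within [set` `[(0:R), 1]], continuous (fun x => sin (u 0 x))} by exact: cComp.
  have cP2 : {within [set` `[(0:R), 1]], continuous (fun x => sin (u h x) - sin (u 0 x))}.
    by apply: cD => //; exact: cN.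
  have cP : {within [set` `[(0:R), 1]], continuous
      (fun x => h * (cos (u 0 x) * v 0 x) - (sin (u h x) - sin (u 0 x)))}.
    by apply: cD => //; exact: cN.
  have cW2 := cX2 cw.
  have cV2 := cX2 cv0.
  have cG2 : {within [set` `[(0:R), 1]], continuous (fun x =>
      (h / (2 * e) + 4 * h ^+ 2) * ((u h x - u 0 x) / h - v 0 x) ^+ 2 + 4 * h ^+ 2 * v 0 x ^+ 2)}.
    by apply: cD; (apply: cM => //; exact: cC).
  have cG : {within [set` `[(0:R), 1]], continuous (fun x => h * (e / 2) + (
      (h / (2 * e) + 4 * h ^+ 2) * ((u h x - u 0 x) / h - v 0 x) ^+ 2 + 4 * h ^+ 2 * v 0 x ^+ 2))}.
    by apply: cD => //; exact: cC.
  have IP : Defs.Rint 0 1 (fun x => h * (cos (u 0 x) * v 0 x) - (sin (u h x) - sin (u 0 x))) = h * D.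
    rewrite /Defs.Rint (RintegralB mI (cI _ cP1) (cI _ cP2)) (RintegralZl _ mI (cI _ cCV)).
    rewrite (RintegralB mI (cI _ cSh) (cI _ cS0)).
    have := per h hT'; have := per 0 t0; rewrite /Defs.Rint => -> ->.
    by rewrite subr0 subr0.
  have IG : Defs.Rint 0 1 (fun x => h * (e / 2) + (
      (h / (2 * e) + 4 * h ^+ 2) * ((u h x - u 0 x) / h - v 0 x) ^+ 2 + 4 * h ^+ 2 * v 0 x ^+ 2))
      = h * (e / 2) + ((h / (2 * e) + 4 * h ^+ 2) * W + 4 * h ^+ 2 * V).
    rewrite /Defs.Rint (RintegralD mI (cI _ (cC _)) (cI _ cG2)).
    rewrite (RintegralD mI (cI _ (cM (cC _) cW2)) (cI _ (cM (cC _) cV2))).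
    rewrite (RintegralZl _ mI (cI _ cW2)) (RintegralZl _ mI (cI _ cV2)).
    rewrite Rintegral_cst //.
    rewrite (_ : fine _ = 1) ?mulr1 //.
    have H := lebesgue_measure_itv `[(0:R), 1].
    rewrite /= lte_fin ltr01 in H.
    apply: (@eq_trans _ _ (fine ((1:R) - 0)%:E)); first exact: (congr1 fine H).
    by rewrite subr0.
  have key : h * eps <= h * (e / 2) + ((h / (2 * e) + 4 * h ^+ 2) * W + 4 * h ^+ 2 * V).
    have -> : h * eps = `|Defs.Rint 0 1 (fun x => h * (cos (u 0 x) * v 0 x) - (sin (u h x) - sin (u 0 x)))|.
      by rewrite IP normrM gtr0_norm.
    rewrite -IG.
    apply: (le_trans (le_normr_Rintegral mI (cI _ cP))).
    apply: le_Rintegral => //; [exact: cI _ (cAbs cP)| exact: cI _ cG |].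
    move=> x _; apply: pt_bound => //.
  have en : e != 0 by rewrite gt_eqF.
  have E : h * (e / 2) + ((h / (2 * e) + 4 * h ^+ 2) * W + 4 * h ^+ 2 * V) =
      h * (e / 2 + W / (2 * e) + 4 * (h * W) + 4 * (h * V)) by field.
  move: key; rewrite E ler_pM2l // => key.
  have X : W / (2 * e) < e / 2.
    rewrite ltr_pdivrMr ?mulr_gt0 //.
    have -> : e / 2 * (2 * e) = e ^+ 2 by field.
    exact: We.
  have W1 : W <= 1 by nra.
  have hW : h * W <= h * 1 by rewrite ler_pM2l.
  lra.
move: D0; rewrite /D => D0.
rewrite /K1 /antider0.
case: (Heq 0 t0) => _ E0.
set C0 := Defs.Rint 0 1 (fun y => Defs.Rint 0 y (fun y0 => sin (u 0 y0))).
have cu0 := cu 0 t0; have cv0 := cv 0 t0.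
have cCV : {within [set` `[(0:R), 1]], continuous (fun x => cos (u 0 x) * v 0 x)}.
  by apply: cM => //; exact: cComp.
have cCo : {within [set` `[(0:R), 1]], continuous (fun x => cos (u 0 x))} by exact: cComp.
have -> : Defs.Rint 0 1 (fun x => cos (u 0 x) * (Defs.Rint 0 x (fun y => sin (u 0 y)) - C0))
   = Defs.Rint 0 1 (fun x => cos (u 0 x) * v 0 x - (v 0 0 + C0) * cos (u 0 x)).
  rewrite /Defs.Rint; apply: eq_Rintegral => x; rewrite inE /= in_itv /= => xI.
  rewrite (E0 x xI) /Defs.Rint; ring.
rewrite /Defs.Rint (RintegralB mI (cI _ cCV) (cI _ (cM (cC _) cCo))) (RintegralZl _ mI (cI _ cCo)).
move: D0 Sc; rewrite /Defs.Rint => -> ->.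
by rewrite mulr0 subr0.
Qed.
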